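(* Let $\mathcal{H}$ be a finite-dimensional complex Hilbert space and let $\Phi: B(\mathcal{H})\to B(\mathcal{H})$ be a Hermitian-preserving trace-preserving linear map which is invertible. Then $\Phi$ is semi-positive if and only if $\Phi^{-1}$ is semi-positive. In particular, if $\Phi$ is CPTP (or positive and trace-preserving) and invertible, then $\Phi^{-1}$ is semi-positive and trace-preserving.
   Context: $B(\mathcal{H})$ denotes all linear operators on $\mathcal{H}$; a density matrix is a positive semidefinite operator of trace one. A map is Hermitian-preserving if $\Phi(X^\dagger)=\Phi(X)^\dagger$ and trace-preserving if $\operatorname{Tr}\Phi(X)=\operatorname{Tr}X$. A Hermitian-preserving map $\Phi$ is semi-positive if there exists an invertible density matrix $\rho$ such that $\Phi(\rho)$ is an invertible density matrix. *)

(* Defs.v *)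
From HB Require Import structures.
From mathcomp Require Import all_boot all_order all_algebra.
From mathcomp Require Import reals.
From mathcomp.real_closed Require Import complex.
Set Implicit Arguments. Unset Strict Implicit. Unset Printing Implicit Defensive.
Import Order.TTheory GRing.Theory Num.Theory.
Local Open Scope ring_scope.

(* Complex numbers: C = R[i] for a real field R : realType.
   The Hilbert space H is C^m; B(H) = 'M[C]_m. *)

Section QDefs.
Variable C : numClosedFieldType.

Definition adjmx m n (A : 'M[C]_(m, n)) : 'M[C]_(n, m) := map_mx Num.conj A^T.

Definition hermitianmx m (A : 'M[C]_m) : Prop := adjmx A = A.

Definition psdmx m (A : 'M[C]_m) : Prop :=
  hermitianmx A /\ forall v : 'cV[C]_m, 0 <= (adjmx v *m A *m v) 0 0.

Definition density m (A : 'M[C]_m) : Prop := psdmx A /\ \tr A = 1.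

Definition invertible_density m (A : 'M[C]_m) : Prop :=
  density A /\ A \in unitmx.

Definition hermitian_preserving m (Phi : 'M[C]_m -> 'M[C]_m) : Prop :=
  forall X, Phi (adjmx X) = adjmx (Phi X).

Definition trace_preserving m (Phi : 'M[C]_m -> 'M[C]_m) : Prop :=
  forall X, \tr (Phi X) = \tr X.

Definition semi_positive m (Phi : 'M[C]_m -> 'M[C]_m) : Prop :=
  hermitian_preserving Phi /\
  exists rho, invertible_density rho /\ invertible_density (Phi rho).

Definition positive_map m (Phi : 'M[C]_m -> 'M[C]_m) : Prop :=
  forall X, psdmx X -> psdmx (Phi X).

(* id_k (x) Phi acting on k x k block matrices with m x m blocks *)
Definition ampliation k m (Phi : 'M[C]_m -> 'M[C]_m)
    (X : 'M[C]_(\sum_(i < k) m)) : 'M[C]_(\sum_(i < k) m) :=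
  \mxblock_(i < k, j < k) Phi (submxblock X i j).

Definition completely_positive m (Phi : 'M[C]_m -> 'M[C]_m) : Prop :=
  forall k (X : 'M[C]_(\sum_(i < k) m)), psdmx X -> psdmx (ampliation Phi X).

End QDefs.

(* Main.v *)
Require Import Defs.
From HB Require Import structures.
From mathcomp Require Import all_boot all_order all_algebra.
From mathcomp Require Import reals.
From mathcomp.real_closed Require Import complex.
Set Implicit Arguments. Unset Strict Implicit. Unset Printing Implicit Defensive.
Import Order.TTheory GRing.Theory Num.Theory.
Local Open Scope ring_scope.

Section A.
Variable C : numClosedFieldType.
Implicit Types m n p : nat.

Lemma adjmxK m n (A : 'M[C]_(m,n)) : adjmx (adjmx A) = A.
Proof. by apply/matrixP => i j; rewrite !mxE conjCK. Qed.

Lemma adjmx_mul m n p (A : 'M[C]_(m,n)) (B : 'M[C]_(n,p)) :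
  adjmx (A *m B) = adjmx B *m adjmx A.
Proof. by rewrite /adjmx trmx_mul map_mxM. Qed.

Lemma adjmxD m n (A B : 'M[C]_(m,n)) : adjmx (A + B) = adjmx A + adjmx B.
Proof. by apply/matrixP => i j; rewrite !mxE rmorphD. Qed.

Lemma adjmxZ m n a (A : 'M[C]_(m,n)) : adjmx (a *: A) = a^* *: adjmx A.
Proof. by apply/matrixP => i j; rewrite !mxE rmorphM. Qed.

Lemma adjmx_scalar m a : adjmx (a%:M : 'M[C]_m) = a^*%:M.
Proof. by apply/matrixP => i j; rewrite !mxE rmorphMn eq_sym. Qed.

Lemma quad_self_ge0 m (v : 'cV[C]_m) : 0 <= (adjmx v *m v) 0 0.
Proof.
rewrite mxE; apply: sumr_ge0 => k _; rewrite !mxE mulrC; exact: mul_conjC_ge0.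
Qed.

Lemma quad_self_eq0 m (v : 'cV[C]_m) : (adjmx v *m v) 0 0 = 0 -> v = 0.
Proof.
rewrite mxE => /eqP; rewrite psumr_eq0 => [/allP H|k _]; last first.
  by rewrite !mxE mulrC; exact: mul_conjC_ge0.
apply/matrixP => k l; rewrite (ord1 l) mxE.
have := H k (mem_index_enum _); rewrite !mxE mulrC mul_conjC_eq0 => /eqP ->.
done.
Qed.

Lemma psd_rank1 m (u : 'cV[C]_m) : psdmx (u *m adjmx u).
Proof.
split. rewrite /hermitianmx. apply: (etrans (adjmx_mul _ _)). by rewrite adjmxK.
move=> v; rewrite mulmxA -mulmxA.
set x := (adjmx u *m v).
have -> : adjmx v *m u = adjmx x by rewrite adjmx_mul adjmxK.
rewrite mxE big_ord1 !mxE mulrC; exact: mul_conjC_ge0.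
Qed.


Lemma expand_rank1 m (a b : 'cV[C]_m) c :
  (a + c *: b) *m adjmx (a + c *: b) = a *m adjmx a + c^* *: (a *m adjmx b)
     + c *: (b *m adjmx a) + (c * c^*) *: (b *m adjmx b).
Proof.
rewrite adjmxD adjmxZ mulmxDl !mulmxDr -!scalemxAl -!scalemxAr scalerA.
by rewrite !addrA [c * _]mulrC.
Qed.

Lemma ge0_opp_eq0 (x : C) : 0 <= x -> 0 <= - x -> x = 0.
Proof. by move=> h1; rewrite oppr_ge0 => h2; apply/le_anti; rewrite h1 h2. Qed.

Lemma adj_delta m (k : 'I_m) : adjmx (delta_mx k 0 : 'cV[C]_m) = delta_mx 0 k.
Proof. by apply/matrixP => i j; rewrite !mxE conjC_nat andbC. Qed.

Lemma posfun_vanish m (f : 'M[C]_m -> C)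
  (fD : forall A B, f (A + B) = f A + f B)
  (fZ : forall a A, f (a *: A) = a * f A)
  (fpos : forall u : 'cV[C]_m, 0 <= f (u *m adjmx u))
  (f1 : f 1%:M = 0) : forall A, f A = 0.
Proof.
have f0 : f 0 = 0 by rewrite -(scale0r 0) fZ mul0r.
have fsum : forall I (r : seq I) P (F : I -> 'M[C]_m),
    f (\sum_(i <- r | P i) F i) = \sum_(i <- r | P i) f (F i).
  by move=> I r P F; apply: (big_morph f fD f0).
have eE : forall k : 'I_m, (delta_mx k 0 : 'cV[C]_m) *m adjmx (delta_mx k 0) = delta_mx k k.
  by move=> k; rewrite adj_delta mul_delta_mx.
have diag0 : forall k, f (delta_mx k k) = 0.
  move: f1; rewrite mx1_sum_delta fsum => /eqP; rewrite psumr_eq0 => [/allP H k|k _].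
    by apply/eqP; exact: H (mem_index_enum _).
  by rewrite -eE.
have off0 : forall i j, f (delta_mx i j) = 0.
  move=> i j.
  set a : 'cV[C]_m := delta_mx i 0; set b : 'cV[C]_m := delta_mx j 0.
  have Hab : a *m adjmx b = delta_mx i j by rewrite adj_delta mul_delta_mx.
  have Hba : b *m adjmx a = delta_mx j i by rewrite adj_delta mul_delta_mx.
  have F c : f ((a + c *: b) *m adjmx (a + c *: b)) = c^* * f (delta_mx i j) + c * f (delta_mx j i).
    rewrite expand_rank1 !fD !fZ Hab Hba !eE !diag0 mulr0 add0r addr0; done.
  have h1 := fpos (a + 1 *: b); have h2 := fpos (a + (-1) *: b).
  have h3 := fpos (a + 'i *: b); have h4 := fpos (a + (- 'i) *: b).
  rewrite F in h1; rewrite F in h2; rewrite F in h3; rewrite F in h4.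
  have cN : (- 'i)^* = 'i :> C by rewrite -conjCi conjCK.
  move: h1 h2 h3 h4; rewrite cN rmorph1 rmorphN1 conjCi !mul1r !mulN1r.
  move=> h1 h2 h3 h4.
  have s0 : f (delta_mx i j) + f (delta_mx j i) = 0.
    by apply: ge0_opp_eq0 => //; rewrite opprD.
  have d0 : 'i * (f (delta_mx j i) - f (delta_mx i j)) = 0.
    apply: ge0_opp_eq0; first by rewrite mulrBr addrC -mulNr.
    by rewrite mulrBr opprB -mulNr.
  move/eqP: d0; rewrite mulf_eq0 (negPf (@neq0Ci C)) /= subr_eq0 => /eqP e.
  move: s0; rewrite e -mulr2n => /eqP; rewrite mulrn_eq0 /= => /eqP; done.
move=> A; rewrite (matrix_sum_delta A) fsum big1 // => i _.
by rewrite fsum big1 // => j _; rewrite fZ off0 mulr0.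
Qed.

Lemma adjmx_mxcol k m (c : 'I_k -> 'cV[C]_m) :
  adjmx (\mxcol_i c i) = \mxrow_i adjmx (c i).
Proof. by apply/matrixP => i j; rewrite !mxE. Qed.

Lemma adjmx_mxblock k m (B : 'I_k -> 'I_k -> 'M[C]_m) :
  adjmx (\mxblock_(i, j) B i j) = \mxblock_(i, j) adjmx (B j i).
Proof. by apply/matrixP => i j; rewrite !mxE. Qed.

Lemma qf_block1 m (Z : 'M[C]_m) (c : 'I_1 -> 'cV[C]_m) :
  adjmx (\mxcol_i c i) *m (\mxblock_(i < 1, j < 1) Z) *m \mxcol_j c j
  = adjmx (c ord0) *m Z *m c ord0.
Proof.
by rewrite adjmx_mxcol mul_mxrow_mxblock mul_mxrow_mxcol !big_ord1.
Qed.

Lemma psd_block1 m (Z : 'M[C]_m) :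
  psdmx Z <-> psdmx (\mxblock_(i < 1, j < 1) Z).
Proof.
split => [[hZ qZ]|[hB qB]].
  split; first by rewrite /hermitianmx; apply: (etrans (adjmx_mxblock _)); rewrite hZ.
  move=> v; rewrite -(submxcolK v) qf_block1; exact: qZ.
split.
  have e : \mxblock_(i < 1, j < 1) adjmx Z = \mxblock_(i < 1, j < 1) Z :=
    etrans (esym (adjmx_mxblock (fun _ _ => Z))) hB.
  by move: e => /(congr1 (fun M => submxblock M ord0 ord0)); rewrite !mxblockK.
move=> w; have := qB (\mxcol_(i < 1) w); by rewrite qf_block1.
Qed.

Lemma cp_positive m (Phi : 'M[C]_m -> 'M[C]_m) :
  completely_positive Phi -> positive_map Phi.
Proof.
move=> cp Y /psd_block1 hY; have := cp 1%N _ hY.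
rewrite /ampliation. under eq_mxblock do rewrite mxblockK.
by move=> h; apply/(psd_block1 (Phi Y)).
Qed.

Lemma adjmx0 m n : adjmx (0 : 'M[C]_(m, n)) = 0.
Proof. by apply/matrixP => i j; rewrite !mxE rmorph0. Qed.

Definition rho0 n : 'M[C]_n.+1 := (n.+1%:R^-1)%:M.

Lemma rho0_density n : invertible_density (rho0 n).
Proof.
have c0 : (n.+1%:R : C) != 0 by rewrite pnatr_eq0.
have cR : (n.+1%:R^-1 : C)^* = n.+1%:R^-1.
  by rewrite fmorphV rmorph_nat.
split; [split; [split|] |].
- by rewrite /hermitianmx; apply: (etrans (adjmx_scalar _ _)); rewrite cR.
- move=> v; rewrite mul_mx_scalar -scalemxAl mxE; apply: mulr_ge0.
    by rewrite invr_ge0 ler0n.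
  exact: quad_self_ge0.
- by rewrite /rho0 mxtrace_scalar -[LHS]mulr_natr mulVf.
- have -> : rho0 n = n.+1%:R^-1 *: 1%:M by rewrite scalemx1.
  by rewrite unitmxZ ?unitmx1 // unitfE invr_eq0.
Qed.

Lemma pos_sp n (Phi : {linear 'M[C]_n.+1 -> 'M[C]_n.+1}) Psi :
  hermitian_preserving Phi -> trace_preserving Phi -> positive_map Phi ->
  cancel Psi Phi -> semi_positive Phi.
Proof.
move=> hP tP pP KP; split => //; exists (rho0 n).
have rd := rho0_density n; split => //.
case: rd => [[psdr trr] ur].
have [hS qS] := pP _ psdr.
split; first by split; [exact: pP | rewrite tP].
set S := Phi (rho0 n).
case: (boolP (S \in unitmx)) => // nU; exfalso.
move: nU; rewrite unitmxE unitfE negbK => /det0P [v v0 vS].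
set w := adjmx v.
have Sw : S *m w = 0.
  have hS2 : adjmx S = S := hS.
  by rewrite /w -{1}hS2 -adjmx_mul vS adjmx0.
have w0 : w != 0.
  by apply: contra v0 => /eqP w0; rewrite -(adjmxK v) -/w w0 adjmx0.
pose f (A : 'M[C]_n.+1) := (adjmx w *m Phi A *m w) 0 0.
have fD A B : f (A + B) = f A + f B.
  by rewrite /f linearD /= mulmxDr mulmxDl mxE.
have fZ a A : f (a *: A) = a * f A.
  by rewrite /f linearZ /= -scalemxAr -scalemxAl mxE.
have fpos (u : 'cV[C]_n.+1) : 0 <= f (u *m adjmx u).
  by have [_ q] := pP _ (psd_rank1 u); exact: q.
have f1 : f 1%:M = 0.
  have -> : (1%:M : 'M[C]_n.+1) = n.+1%:R *: rho0 n.
    by rewrite /rho0 scale_scalar_mx mulfV // pnatr_eq0.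
  by rewrite fZ /f -/S -mulmxA Sw mulmx0 mxE mulr0.
have := posfun_vanish fD fZ fpos f1 (Psi (w *m adjmx w)).
rewrite /f KP mulmxA -mulmxA mxE big_ord1 => /eqP; rewrite mulf_eq0 orbb => /eqP.
by move/quad_self_eq0 => e; rewrite e eqxx in w0.
Qed.

End A.

Theorem corollary1 (R : realType) (n : nat)
    (Phi : {linear 'M[R[i]]_n.+1 -> 'M[R[i]]_n.+1})
    (Psi : 'M[R[i]]_n.+1 -> 'M[R[i]]_n.+1) :
  hermitian_preserving Phi -> trace_preserving Phi ->
  cancel Phi Psi -> cancel Psi Phi ->
  (semi_positive Phi <-> semi_positive Psi) /\
  ((completely_positive Phi \/ positive_map Phi) ->
     semi_positive Psi /\ trace_preserving Psi).
Proof.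
move=> hP tP PK KP.
have hPsi : hermitian_preserving Psi.
  by move=> X; apply: (can_inj PK); rewrite KP hP KP.
have tPsi : trace_preserving Psi.
  by move=> X; rewrite -{2}(KP X) tP.
have eqv : semi_positive Phi <-> semi_positive Psi.
  split.
    move=> [_ [rho [r1 r2]]]; split => //; exists (Phi rho); by rewrite PK.
  move=> [_ [rho [r1 r2]]]; split => //; exists (Psi rho); by rewrite KP.
split => // H; split => //; apply/eqv.
have pos : positive_map Phi by case: H => [/cp_positive|].
exact: (pos_sp hP tP pos KP).
Qed.
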